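(* Let $0 \leq a \leq b$. For any $t>0$ and $\lambda \in [0,+\infty)$, \[ |f_t(\lambda) - \tilde{\mathbf{1}}_{[a,b]}(\lambda)| \leq \begin{cases} s(t|\lambda - a|) & \text{if } \lambda \in [0,a)\cup\{b\},\\ s(t|\lambda-a|) + s(t|\lambda-b|) & \text{if } \lambda\in(a,b),\\ s(t|\lambda-b|) & \text{if } \lambda\in\{a\}\cup(b,+\infty), \end{cases} \] where $s:(0,+\infty)\to\mathbb{R}$ is $s(\rho) = \frac{e^{-\rho^2}}{2\sqrt\pi\,\rho}$.
   Context: For $0\le a\le b$ and $t>0$, $f_t(\lambda) = \frac{t}{\sqrt\pi}\int_a^b\exp(-t^2(\lambda-\mu)^2)\,d\mu$. The function $\tilde{\mathbf{1}}_{[a,b]}$ equals $1$ on $(a,b)$, $\frac12$ at $x=a$ and at $x=b$, and $0$ elsewhere. (When $a=b$, the cases are read with the conventions as printed.) *)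

(* Defs.v *)
From Stdlib Require Import Reals Lra.
From Coquelicot Require Import Coquelicot.
Open Scope R_scope.

Definition f_t (t a b lam : R) : R :=
  t / sqrt PI * RInt (fun mu => exp (- (t ^ 2 * (lam - mu) ^ 2))) a b.

Definition tilde1 (a b x : R) : R :=
  if Rlt_dec a x then
    (if Rlt_dec x b then 1 else if Req_EM_T x b then 1/2 else 0)
  else if Req_EM_T x a then 1/2
  else if Req_EM_T x b then 1/2 else 0.

Definition s (rho : R) : R := exp (- rho ^ 2) / (2 * sqrt PI * rho).

(* Main.v *)
Require Import Defs.
From Stdlib Require Import Reals Lra.
From Coquelicot Require Import Coquelicot.
Open Scope R_scope.

Definition g (u : R) : R := exp (- (u ^ 2)).
Definition I (x : R) : R := RInt g 0 x.
Definition h (u v : R) : R := exp (- (u ^ 2 * (1 + v ^ 2))) / (1 + v ^ 2).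
Definition dh (u v : R) : R := -2 * u * exp (- (u ^ 2 * (1 + v ^ 2))).
Definition G (x : R) : R := RInt (fun s => h x s) 0 1.
Definition P (x : R) : R := I x ^ 2 + G x.

Lemma pos1 (v : R) : 0 < 1 + v ^ 2.
Proof. nra. Qed.

Lemma g_cont x : continuous g x.
Proof. apply (ex_derive_continuous (K:=R_AbsRing) (V:=R_NormedModule)). unfold g. auto_derive. auto. Qed.

Lemma ex_RInt_g a b : ex_RInt g a b.
Proof. apply (ex_RInt_continuous (V:=R_CompleteNormedModule)). intros; apply g_cont. Qed.

Lemma I_deriv x : is_derive I x (g x).
Proof.
  apply is_derive_RInt with (a := 0).
  - apply filter_forall; intros; apply (RInt_correct (V:=R_CompleteNormedModule)), ex_RInt_g.
  - apply g_cont.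
Qed.

Lemma h_der u v : is_derive (fun z => h z v) u (dh u v).
Proof.
  unfold h, dh. auto_derive.
  - generalize (pos1 v); lra.
  - replace (1 + v*(v*1)) with (1+v^2) by ring; replace (u*(u*1)) with (u^2) by ring. generalize (pos1 v); intros; field; lra.
Qed.

Lemma Derive_h u v : Derive (fun z => h z v) u = dh u v.
Proof. apply is_derive_unique, h_der. Qed.

Lemma dh_cont x t : continuity_2d_pt (fun u v => Derive (fun z => h z v) u) x t.
Proof.
  apply continuity_2d_pt_ext with
    (f := fun u v => ((-2) * u) * exp (- ((u * u) * (1 + v * v)))).
  { intros; rewrite Derive_h; unfold dh. f_equal. f_equal. f_equal. ring. }
  apply continuity_2d_pt_mult.
  - apply continuity_2d_pt_mult. apply continuity_2d_pt_const. apply continuity_2d_pt_id1.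
  - apply continuity_1d_2d_pt_comp with (f := exp) (g := fun u v => - ((u * u) * (1 + v * v))).
    + apply derivable_continuous_pt, derivable_pt_exp.
    + apply continuity_2d_pt_opp. apply continuity_2d_pt_mult.
      * apply continuity_2d_pt_mult; apply continuity_2d_pt_id1.
      * apply continuity_2d_pt_plus. apply continuity_2d_pt_const.
        apply continuity_2d_pt_mult; apply continuity_2d_pt_id2.
Qed.

Lemma ex_RInt_h y a b : ex_RInt (fun s => h y s) a b.
Proof.
  apply (ex_RInt_continuous (V:=R_CompleteNormedModule)). intros. apply (ex_derive_continuous (K:=R_AbsRing) (V:=R_NormedModule)). unfold h.
  auto_derive. generalize (pos1 z); lra.
Qed.

Lemma G_deriv x : is_derive G x (RInt (fun s => dh x s) 0 1).
Proof.
  unfold G.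
  rewrite <- (RInt_ext (fun s => Derive (fun z => h z s) x)).
  2:{ intros; apply Derive_h. }
  apply (is_derive_RInt_param h 0 1 x).
  - apply filter_forall. intros y t _. eexists. apply h_der.
  - intros; apply dh_cont.
  - apply filter_forall. intros; apply ex_RInt_h.
Qed.
Lemma comp_lin_R (f : R -> R) u v a b : ex_RInt f (u*a+v) (u*b+v) ->
  RInt (fun y => u * f (u*y+v)) a b = RInt f (u*a+v) (u*b+v).
Proof. intros H. exact (RInt_comp_lin f u v a b H). Qed.

Lemma RInt_scal_R (f : R -> R) k a b : ex_RInt f a b ->
  RInt (fun y => k * f y) a b = k * RInt f a b.
Proof. intros H. exact (RInt_scal f a b k H). Qed.

Lemma RInt_dh x : RInt (fun s => dh x s) 0 1 = -2 * g x * I x.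
Proof.
  rewrite (RInt_ext _ (fun s => (-2 * g x) * (x * g (x * s + 0)))).
  2:{ intros s _. unfold dh, g. simpl.
      transitivity (-2 * x * (exp (- (x*(x*1))) * exp (- ((x*s+0)*((x*s+0)*1))))).
      f_equal. rewrite <- exp_plus. f_equal. ring. ring. }
  rewrite RInt_scal_R.
  2:{ apply (ex_RInt_continuous (V:=R_CompleteNormedModule)). intros.
      apply (ex_derive_continuous (K:=R_AbsRing) (V:=R_NormedModule)).
      unfold g. auto_derive. auto. }
  rewrite (comp_lin_R g x 0 0 1) by apply ex_RInt_g.
  replace (x * 0 + 0) with 0 by ring. replace (x * 1 + 0) with x by ring.
  reflexivity.
Qed.

Lemma P_deriv x : is_derive P x 0.
Proof.
  unfold P.
  replace 0 with (INR 2 * (g x) * I x ^ 1 + (-2 * g x * I x)) by (simpl; ring).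
  apply (is_derive_plus (K:=R_AbsRing) (V:=R_NormedModule)).
  - replace (INR 2 * g x * I x ^ 1) with (INR 2 * g x * I x ^ Nat.pred 2) by reflexivity.
    apply (is_derive_pow I 2 x (g x)). apply I_deriv.
  - rewrite <- RInt_dh. apply G_deriv.
Qed.

Lemma P_const x : P x = P 0.
Proof.
  assert (H := is_RInt_derive P (fun _ => 0) 0 x).
  assert (H2 : is_RInt (fun _ : R => 0) 0 x (minus (P x) (P 0))).
  { apply H. intros; apply P_deriv. intros; apply continuous_const. }
  apply (is_RInt_unique (V:=R_CompleteNormedModule)) in H2.
  assert (H3 := is_RInt_unique (V:=R_CompleteNormedModule) _ _ _ _ (is_RInt_const (V:=R_CompleteNormedModule) 0 x 0)).
  rewrite H3 in H2. unfold minus, plus, opp, scal in H2; simpl in H2.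
  unfold mult in H2; simpl in H2. lra.
Qed.

Lemma h0 s : h 0 s = / (1 + s ^ 2).
Proof. unfold h. replace (- (0 ^ 2 * (1 + s ^ 2))) with 0 by ring.
  rewrite exp_0. unfold Rdiv; ring. Qed.

Lemma P0 : P 0 = PI / 4.
Proof.
  unfold P, I, G. rewrite RInt_point. unfold zero; simpl.
  rewrite (RInt_ext _ (fun s => / (1 + s ^ 2))).
  2:{ intros s _. apply h0. }
  rewrite (is_RInt_unique (V:=R_CompleteNormedModule) _ _ _ (minus (atan 1) (atan 0))).
  - rewrite atan_1, atan_0. unfold minus, plus, opp; simpl. lra.
  - apply (is_RInt_derive (V:=R_CompleteNormedModule) atan).
    + intros. apply is_derive_Reals, derivable_pt_lim_atan.
    + intros. apply (ex_derive_continuous (K:=R_AbsRing) (V:=R_NormedModule)).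
      auto_derive. generalize (pos1 x); simpl; lra.
Qed.

Lemma g_pos u : 0 < g u.
Proof. unfold g; apply exp_pos. Qed.

Lemma I_nonneg x : 0 <= x -> 0 <= I x.
Proof.
  intros Hx. unfold I. apply RInt_ge_0; auto. apply ex_RInt_g.
  intros; left; apply g_pos.
Qed.

Lemma G_nonneg x : 0 <= G x.
Proof.
  unfold G. apply RInt_ge_0. lra. apply ex_RInt_h.
  intros s _. unfold h. unfold Rdiv. left. apply Rmult_lt_0_compat.
  apply exp_pos. apply Rinv_0_lt_compat, pos1.
Qed.

Lemma sqrtPI_pos : 0 < sqrt PI.
Proof. apply sqrt_lt_R0, PI_RGT_0. Qed.

Lemma I_sq_G x : I x ^ 2 + G x = (sqrt PI / 2) ^ 2.
Proof.
  change (P x = (sqrt PI / 2) ^ 2). rewrite P_const, P0.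
  replace ((sqrt PI / 2) ^ 2) with (sqrt PI * sqrt PI / 4) by field.
  rewrite sqrt_sqrt. reflexivity. left; apply PI_RGT_0.
Qed.

Lemma I_le x : 0 <= x -> I x <= sqrt PI / 2.
Proof.
  intros Hx. generalize (I_sq_G x) (G_nonneg x) (I_nonneg x Hx) sqrtPI_pos.
  intros E HG HI HQ. nra.
Qed.

Lemma G_le x : 0 < x -> G x <= exp (- x ^ 2) * I x / x.
Proof.
  intros Hx. unfold G.
  apply Rle_trans with (RInt (fun s => exp (- x ^ 2) / x * (x * g (x * s + 0))) 0 1).
  - apply RInt_le. lra. apply ex_RInt_h.
    + apply (ex_RInt_continuous (V:=R_CompleteNormedModule)). intros.
      apply (ex_derive_continuous (K:=R_AbsRing) (V:=R_NormedModule)).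
      unfold g. auto_derive. auto.
    + intros s _. unfold h, g.
      replace (exp (- x ^ 2) / x * (x * exp (- (x * s + 0) ^ 2)))
        with (exp (- (x ^ 2 * (1 + s ^ 2)))).
      2:{ transitivity (exp (- x ^ 2) * exp (- (x * s + 0) ^ 2)).
          rewrite <- exp_plus. f_equal. ring. field. lra. }
      generalize (exp_pos (- (x ^ 2 * (1 + s ^ 2)))) (pos1 s); intros He Hp.
      unfold Rdiv. rewrite <- (Rmult_1_r (exp _)) at 2.
      apply Rmult_le_compat_l. lra.
      rewrite <- Rinv_1. apply Rinv_le_contravar. lra. nra.
  - rewrite RInt_scal_R.
    2:{ apply (ex_RInt_continuous (V:=R_CompleteNormedModule)). intros.
      apply (ex_derive_continuous (K:=R_AbsRing) (V:=R_NormedModule)).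
      unfold g. auto_derive. auto. }
    rewrite (comp_lin_R g x 0 0 1) by apply ex_RInt_g.
    replace (x * 0 + 0) with 0 by ring. replace (x * 1 + 0) with x by ring.
    change (RInt g 0 x) with (I x). right; field. lra.
Qed.

Lemma key x : 0 < x -> 0 <= sqrt PI / 2 - I x <= exp (- x ^ 2) / (2 * x).
Proof.
  intros Hx.
  generalize (I_sq_G x) (G_le x Hx) (I_nonneg x (Rlt_le _ _ Hx)) (I_le x (Rlt_le _ _ Hx))
    sqrtPI_pos (exp_pos (- x ^ 2)).
  set (Q := sqrt PI). set (e := exp (- x ^ 2)). set (J := I x).
  intros E HG HI HIQ HQ He.
  split. lra.
  assert (HG' : G x * x <= e * J).
  { apply Rmult_le_reg_r with (/ x). apply Rinv_0_lt_compat; lra.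
    replace (G x * x * / x) with (G x) by (field; lra).
    unfold Rdiv in HG. exact HG. }
  assert (E2 : (Q/2 - J) * (Q/2 + J) = G x) by nra.
  apply Rmult_le_reg_r with (2 * x). lra.
  replace (e / (2 * x) * (2 * x)) with e by (field; lra).
  destruct (Req_dec J 0) as [HJ|HJ].
  - rewrite HJ in *. nra.
  - assert (0 < J) by lra.
    apply Rmult_le_reg_r with J. auto.
    assert (Hd : 0 <= (Q/2 - J) * x) by nra.
    assert (H3 : (Q/2 - J) * x * (2 * J) <= (Q/2 - J) * x * (Q/2 + J)).
    { apply Rmult_le_compat_l; lra. }
    assert (H4 : (Q/2 - J) * x * (Q/2 + J) = G x * x) by (rewrite <- E2; ring).
    nra.
Qed.

Lemma keyJ x : 0 < x -> 0 <= 1/2 - I x / sqrt PI <= s x.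
Proof.
  intros Hx. destruct (key x Hx) as [H1 H2]. generalize sqrtPI_pos; intros HQ.
  unfold s.
  replace (1/2 - I x / sqrt PI) with ((sqrt PI / 2 - I x) / sqrt PI) by (field; lra).
  replace (exp (- x ^ 2) / (2 * sqrt PI * x)) with (exp (- x ^ 2) / (2 * x) / sqrt PI)
    by (field; lra).
  split.
  - apply Rmult_le_pos; auto. left; apply Rinv_0_lt_compat; auto.
  - apply Rmult_le_compat_r; auto. left; apply Rinv_0_lt_compat; auto.
Qed.

Lemma RInt_g_diff p q : RInt g p q = I q - I p.
Proof.
  unfold I. assert (H := RInt_Chasles (V:=R_CompleteNormedModule) g p 0 q (ex_RInt_g _ _) (ex_RInt_g _ _)).
  rewrite <- H. rewrite <- (opp_RInt_swap (V:=R_CompleteNormedModule)) by apply ex_RInt_g.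
  unfold plus, opp; simpl. ring.
Qed.

Lemma ft_pt t lam mu : 0 < t -> exp (- (t ^ 2 * (lam - mu) ^ 2)) = / t * (t * g (t * mu + - t * lam)).
Proof. intros Ht. unfold g. replace ((t * mu + - t * lam) ^ 2) with (t ^ 2 * (lam - mu) ^ 2) by ring.
      field. lra. Qed.

Lemma ft_eq t a b lam : 0 < t ->
  f_t t a b lam = (I (t * (b - lam)) - I (t * (a - lam))) / sqrt PI.
Proof.
  intros Ht. unfold f_t.
  rewrite (RInt_ext _ (fun mu => (/ t) * (t * g (t * mu + (- t * lam))))).
  2:{ intros mu _. apply ft_pt; lra. }
  rewrite RInt_scal_R.
  2:{ apply (ex_RInt_continuous (V:=R_CompleteNormedModule)). intros.
      apply (ex_derive_continuous (K:=R_AbsRing) (V:=R_NormedModule)).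
      unfold g. auto_derive. auto. }
  rewrite (comp_lin_R g t (- t * lam) a b) by apply ex_RInt_g.
  change (RInt g (t * a + - t * lam) (t * b + - t * lam)) with
    (RInt g (t * a + - t * lam) (t * b + - t * lam) : R).
  rewrite RInt_g_diff.
  replace (t * a + - t * lam) with (t * (a - lam)) by ring.
  replace (t * b + - t * lam) with (t * (b - lam)) by ring.
  field. split. generalize sqrtPI_pos; lra. lra.
Qed.

Lemma godd y : -1 * g (-1 * y + 0) = -1 * g y.
Proof. unfold g. f_equal. f_equal. f_equal. ring. Qed.

Lemma I_odd x : I (- x) = - I x.
Proof.
  unfold I.
  assert (H := comp_lin_R g (-1) 0 0 x (ex_RInt_g _ _)).
  replace (-1 * 0 + 0) with 0 in H by ring. replace (-1 * x + 0) with (- x) in H by ring.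
  rewrite <- H.
  rewrite (RInt_ext _ (fun y => -1 * g y)).
  2:{ intros y _. apply godd. }
  rewrite RInt_scal_R by apply ex_RInt_g. ring.
Qed.

Lemma I0 : I 0 = 0.
Proof. unfold I. rewrite RInt_point. reflexivity. Qed.

Lemma half_bound x : 0 < x -> Rabs (I x / sqrt PI - 1/2) <= s x.
Proof.
  intros Hx. destruct (keyJ x Hx). rewrite Rabs_left1 by lra. lra.
Qed.

Lemma diff_bound x y : 0 < x <= y -> Rabs ((I y - I x) / sqrt PI) <= s x.
Proof.
  intros [Hx Hxy]. destruct (keyJ x Hx). destruct (keyJ y (Rlt_le_trans _ _ _ Hx Hxy)).
  assert (0 <= I y - I x).
  { rewrite <- RInt_g_diff. apply RInt_ge_0; auto. apply ex_RInt_g. intros; left; apply g_pos. }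
  generalize sqrtPI_pos; intros HQ.
  rewrite Rabs_pos_eq.
  2:{ apply Rmult_le_pos; auto. left; apply Rinv_0_lt_compat; auto. }
  replace ((I y - I x) / sqrt PI) with ((1/2 - I x / sqrt PI) - (1/2 - I y / sqrt PI))
    by (field; lra). lra.
Qed.

Theorem lemma3p3 (a b : R) (Ha : 0 <= a) (Hab : a <= b) (t lam : R)
  (Ht : 0 < t) (Hlam : 0 <= lam) :
  ((lam < a \/ lam = b) -> 0 < t * Rabs (lam - a) ->
     Rabs (f_t t a b lam - tilde1 a b lam) <= s (t * Rabs (lam - a))) /\
  ((a < lam < b) ->
     Rabs (f_t t a b lam - tilde1 a b lam)
       <= s (t * Rabs (lam - a)) + s (t * Rabs (lam - b))) /\
  ((lam = a \/ b < lam) -> 0 < t * Rabs (lam - b) ->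
     Rabs (f_t t a b lam - tilde1 a b lam) <= s (t * Rabs (lam - b))).
Proof.
  generalize sqrtPI_pos; intros HQ.
  rewrite ft_eq by auto.
  split; [|split].
  - intros [Hl|Hl] Hpos.
    + assert (Ht1 : tilde1 a b lam = 0).
      { unfold tilde1. repeat destruct (Rlt_dec _ _); repeat destruct (Req_EM_T _ _); lra. }
      rewrite Ht1, Rminus_0_r.
      rewrite (Rabs_left (lam - a)) by lra.
      replace (t * - (lam - a)) with (t * (a - lam)) by ring.
      apply diff_bound. split. nra. apply Rmult_le_compat_l; lra.
    + subst lam.
      assert (Hab' : a < b).
      { destruct (Req_dec a b) as [E|E]; [|lra]. subst. rewrite Rminus_diag, Rabs_R0 in Hpos. lra. }
      assert (Ht1 : tilde1 a b b = 1/2).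
      { unfold tilde1. repeat destruct (Rlt_dec _ _); repeat destruct (Req_EM_T _ _); lra. }
      rewrite Ht1, Rminus_diag, Rmult_0_r, I0.
      replace (t * (a - b)) with (- (t * (b - a))) by ring. rewrite I_odd.
      rewrite (Rabs_pos_eq (b - a)) by lra.
      replace ((0 - - I (t * (b - a))) / sqrt PI) with (I (t * (b - a)) / sqrt PI) by (field; lra).
      apply half_bound. nra.
  - intros [H1 H2].
    assert (Ht1 : tilde1 a b lam = 1).
    { unfold tilde1. repeat destruct (Rlt_dec _ _); repeat destruct (Req_EM_T _ _); lra. }
    rewrite Ht1.
    rewrite (Rabs_pos_eq (lam - a)) by lra. rewrite (Rabs_left (lam - b)) by lra.
    replace (t * (a - lam)) with (- (t * (lam - a))) by ring. rewrite I_odd.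
    replace ((I (t * (b - lam)) - - I (t * (lam - a))) / sqrt PI - 1)
      with ((I (t * (lam - a)) / sqrt PI - 1/2) + (I (t * (b - lam)) / sqrt PI - 1/2))
      by (field; lra).
    replace (t * - (lam - b)) with (t * (b - lam)) by ring.
    eapply Rle_trans. apply Rabs_triang.
    apply Rplus_le_compat; apply half_bound; nra.
  - intros [Hl|Hl] Hpos.
    + subst lam.
      assert (Hab' : a < b).
      { destruct (Req_dec a b) as [E|E]; [|lra]. subst. rewrite Rminus_diag, Rabs_R0 in Hpos. lra. }
      assert (Ht1 : tilde1 a b a = 1/2).
      { unfold tilde1. repeat destruct (Rlt_dec _ _); repeat destruct (Req_EM_T _ _); lra. }
      rewrite Ht1, Rminus_diag, Rmult_0_r, I0.
      rewrite (Rabs_left (a - b)) by lra.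
      replace (t * - (a - b)) with (t * (b - a)) by ring.
      replace ((I (t * (b - a)) - 0) / sqrt PI) with (I (t * (b - a)) / sqrt PI) by (field; lra).
      apply half_bound. nra.
    + assert (Ht1 : tilde1 a b lam = 0).
      { unfold tilde1. repeat destruct (Rlt_dec _ _); repeat destruct (Req_EM_T _ _); lra. }
      rewrite Ht1, Rminus_0_r.
      rewrite (Rabs_pos_eq (lam - b)) by lra.
      replace (t * (b - lam)) with (- (t * (lam - b))) by ring.
      replace (t * (a - lam)) with (- (t * (lam - a))) by ring.
      rewrite !I_odd.
      replace ((- I (t * (lam - b)) - - I (t * (lam - a))) / sqrt PI)
        with ((I (t * (lam - a)) - I (t * (lam - b))) / sqrt PI) by (field; lra).
      apply diff_bound. split. nra. apply Rmult_le_compat_l; lra.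
Qed.
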